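(* Let $\mathcal{V}$ be a multivector field on a Lefschetz complex $X$ and let $\varphi:\mathbb{Z}\to X$ be an essential solution of $\mathcal{V}$. Then both limit sets $\alpha(\varphi)$ and $\omega(\varphi)$ are nonempty isolated invariant sets.
   Context: A Lefschetz complex over a field $F$ is a pair $(X,\kappa)$ with $X$ a finite graded set $X=\bigsqcup_{k\ge0}X_k$ and $\kappa:X\times X\to F$ such that $\kappa(x,y)\ne0$ implies $x\in X_k,y\in X_{k-1}$ for some $k$, and $\sum_z\kappa(x,z)\kappa(z,y)=0$. The face relation $\le$ is the partial order generated by $y\le x$ whenever $\kappa(x,y)\ne0$. $\mathrm{cl}\,C$ denotes the set of all faces of elements of $C$; $C$ is closed if $C=\mathrm{cl}\,C$; $C$ is locally closed if $\mathrm{mo}\,C=\mathrm{cl}\,C\setminus C$ is closed. For locally closed $C$, the relative homology $H_*(\mathrm{cl}\,C,\mathrm{mo}\,C)$ (of the chain complex with boundary $\partial x=\sum_y\kappa(x,y)y$) is defined. A multivector field $\mathcal{V}$ is a partition of $X$ into locally closed sets (multivectors); a multivector $V$ is regular if $H_*(\mathrm{cl}\,V,\mathrm{mo}\,V)=0$ and critical otherwise; $[x]_{\mathcal V}$ is the multivector containing $x$. The flow map is the multivalued map $\Pi_{\mathcal V}(x)=\mathrm{cl}\{x\}\cup[x]_{\mathcal V}$. A path is a finite sequence $x_0,\dots,x_n$ with $x_k\in\Pi_{\mathcal V}(x_{k-1})$; a solution is a map $\rho:\mathbb{Z}\to X$ with $\rho(k+1)\in\Pi_{\mathcal V}(\rho(k))$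 for all $k$. A solution $\rho$ is essential if whenever $\rho(k)$ lies in a regular multivector $V$, there exist integers $\ell_1<k<\ell_2$ with $\rho(\ell_1),\rho(\ell_2)\notin V$. A set $A\subset X$ is invariant if for every $x\in A$ there is an essential solution $\rho$ with $\rho(0)=x$ and $\rho(\mathbb{Z})\subset A$. A set is $\mathcal V$-compatible if it is a union of multivectors. A closed set $N$ isolates an invariant set $S\subset N$ if every path in $N$ with both endpoints in $S$ lies entirely in $S$, and $\Pi_{\mathcal V}(S)\subset N$; $S$ is an isolated invariant set if some closed $N$ isolates it. The $\mathcal V$-hull $\langle A\rangle_{\mathcal V}$ of $A\subset X$ is the intersection of all $\mathcal V$-compatible locally closed sets containing $A$. For a solution $\varphi$, $\alpha(\varphi)=\langle\bigcap_{t\in\mathbb{Z}^-}\varphi((-\infty,t])\rangle_{\mathcal V}$ and $\omega(\varphi)=\langle\bigcap_{t\in\mathbb{Z}^+}\varphi([t,\infty))\rangle_{\mathcal V}$. *)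

(* Defs.v *)
From Stdlib Require Import ClassicalEpsilon.
From mathcomp Require Import all_boot all_order all_algebra.
Set Implicit Arguments. Unset Strict Implicit. Unset Printing Implicit Defensive.
Import Order.TTheory GRing.Theory Num.Theory.
Local Open Scope ring_scope.

Definition pbool (P : Prop) : bool :=
  if excluded_middle_informative P then true else false.

Section Lefschetz.
Variables (F : fieldType) (X : finType) (dim : X -> nat) (kappa : X -> X -> F).

Definition lefschetz_graded : Prop :=
  forall x y, kappa x y != 0 -> dim x = (dim y).+1.
Definition lefschetz_dd0 : Prop :=
  forall x y, \sum_(z : X) kappa x z * kappa z y = 0.

Definition facet_rel : rel X := fun x y => kappa x y != 0.
Definition face (y x : X) : bool := connect facet_rel x y.

Definition cl (A : {set X}) : {set X} := [set y | [exists x in A, face y x]].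
Definition is_closed (A : {set X}) : bool := cl A == A.
Definition mo (A : {set X}) : {set X} := cl A :\: A.
Definition loc_closed (A : {set X}) : bool := is_closed (mo A).

(* Relative homology H_*(cl V, mo V): the relative chain group C_k(cl V, mo V)
   = C_k(cl V)/C_k(mo V) is identified with chains supported on V ∩ X_k, with
   the induced boundary (dx)(y) = kappa x y for y in V. *)
Definition rel_boundary (V : {set X}) (c : X -> F) (y : X) : F :=
  \sum_(x in V) c x * kappa x y.

Definition rel_homology_trivial (V : {set X}) : Prop :=
  forall (k : nat) (c : X -> F),
    (forall x, c x != 0 -> (x \in V) && (dim x == k)) ->
    (forall y, y \in V -> rel_boundary V c y = 0) ->
    exists d : X -> F,
      (forall x, d x != 0 -> (x \in V) && (dim x == k.+1)) /\
      (forall y, y \in V -> c y = rel_boundary V d y).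

Definition multivector_field (MV : {set {set X}}) : Prop :=
  partition MV [set: X] /\ (forall V, V \in MV -> loc_closed V).

Definition regular (V : {set X}) : Prop := rel_homology_trivial V.
Definition critical (V : {set X}) : Prop := ~ regular V.

Variable MV : {set {set X}}.

Definition mvec (x : X) : {set X} := pblock MV x.

Definition Pi (x : X) : {set X} := cl [set x] :|: mvec x.
Definition PiS (A : {set X}) : {set X} := \bigcup_(x in A) Pi x.

(* a path x0, x1, ..., xn is given as its head x0 and tail s *)
Definition is_path (x0 : X) (s : seq X) : bool :=
  path (fun a b => b \in Pi a) x0 s.

Definition solution (rho : int -> X) : Prop :=
  forall k : int, rho (k + 1) \in Pi (rho k).

Definition essential (rho : int -> X) : Prop :=
  solution rho /\
  forall k : int, regular (mvec (rho k)) ->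
    exists l1 l2 : int, (l1 < k)%R /\ (k < l2)%R /\
      rho l1 \notin mvec (rho k) /\ rho l2 \notin mvec (rho k).

Definition invariant (A : {set X}) : Prop :=
  forall x, x \in A -> exists rho : int -> X,
    essential rho /\ rho 0 = x /\ forall t, rho t \in A.

Definition compatible (A : {set X}) : bool :=
  [forall x in A, mvec x \subset A].

Definition isolates (N S : {set X}) : Prop :=
  is_closed N /\ S \subset N /\
  (forall x0 s, is_path x0 s -> all (fun y => y \in N) (x0 :: s) ->
     x0 \in S -> last x0 s \in S -> all (fun y => y \in S) (x0 :: s)) /\
  PiS S \subset N.

Definition isolated_invariant (S : {set X}) : Prop :=
  invariant S /\ exists N : {set X}, isolates N S.

Definition hull (A : {set X}) : {set X} :=
  \bigcap_(B : {set X} | [&& compatible B, loc_closed B & A \subset B]) B.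

Definition alpha_set (phi : int -> X) : {set X} :=
  [set x | pbool (forall t : int, (t <= 0)%R ->
                    exists s : int, (s <= t)%R /\ phi s = x)].
Definition omega_set (phi : int -> X) : {set X} :=
  [set x | pbool (forall t : int, (0 <= t)%R ->
                    exists s : int, (t <= s)%R /\ phi s = x)].

Definition alpha_lim (phi : int -> X) : {set X} := hull (alpha_set phi).
Definition omega_lim (phi : int -> X) : {set X} := hull (omega_set phi).

End Lefschetz.

(* Main.v *)
Require Import Defs.
From mathcomp Require Import all_boot all_order all_algebra zify.
From Stdlib Require Import Classical ClassicalEpsilon.
Set Implicit Arguments. Unset Strict Implicit. Unset Printing Implicit Defensive.
Import Order.TTheory GRing.Theory Num.Theory.

Lemma face_refl (F : fieldType) (X : finType) (kappa : X -> X -> F) x :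
  face kappa x x.
Proof. exact: connect0. Qed.

Lemma face_trans (F : fieldType) (X : finType) (kappa : X -> X -> F) x y z :
  face kappa x y -> face kappa y z -> face kappa x z.
Proof. rewrite /face => h1 h2; exact: connect_trans h2 h1. Qed.

Lemma in_cl (F : fieldType) (X : finType) (kappa : X -> X -> F) (A : {set X}) y :
  (y \in cl kappa A) = [exists x in A, face kappa y x].
Proof. by rewrite inE. Qed.

Lemma clP (F : fieldType) (X : finType) (kappa : X -> X -> F) (A : {set X}) y :
  reflect (exists2 x, x \in A & face kappa y x) (y \in cl kappa A).
Proof.
rewrite in_cl; apply: (iffP existsP) => [[x /andP[h1 h2]]|[x h1 h2]]; exists x => //.
by rewrite h1.
Qed.

Lemma sub_cl (F : fieldType) (X : finType) (kappa : X -> X -> F) (A : {set X}) :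
  A \subset cl kappa A.
Proof. apply/subsetP => x hx; apply/clP; exists x => //; exact: face_refl. Qed.

Lemma cl_cl (F : fieldType) (X : finType) (kappa : X -> X -> F) (A : {set X}) :
  cl kappa (cl kappa A) = cl kappa A.
Proof.
apply/setP => y; apply/idP/idP; last by apply: (subsetP (sub_cl _ _)).
move/clP=> [z /clP [x hx hzx] hyz]; apply/clP; exists x => //.
exact: face_trans hyz hzx.
Qed.

Definition convex (F : fieldType) (X : finType) (kappa : X -> X -> F) (A : {set X}) :=
  forall u v w, u \in A -> w \in A -> face kappa u v -> face kappa v w -> v \in A.

Lemma conv_loc (F : fieldType) (X : finType) (kappa : X -> X -> F) (A : {set X}) :
  loc_closed kappa A <-> convex kappa A.
Proof.
rewrite /loc_closed /is_closed /mo; split.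
  move/eqP => H u v w hu hw huv hvw; apply/negPn/negP => hv.
  have hvm : v \in cl kappa A :\: A by rewrite inE hv /=; apply/clP; exists w.
  have : u \in cl kappa (cl kappa A :\: A) by apply/clP; exists v.
  by rewrite H inE hu.
move=> H; apply/eqP/setP => y; apply/idP/idP; last by apply: (subsetP (sub_cl _ _)).
move/clP => [z]; rewrite inE => /andP [hzA /clP [w hw hzw]] hyz.
rewrite inE; apply/andP; split; last by apply/clP; exists w => //; exact: face_trans hyz hzw.
apply/negP => hy; move/negP: hzA; apply; exact: H hy hw hyz hzw.
Qed.

Close Scope ring_scope.

Lemma mvec_self (F : fieldType) (X : finType) (kappa : X -> X -> F)
  (MV : {set {set X}}) (HMV : multivector_field kappa MV) x : x \in mvec MV x.
Proof.
case: HMV => /and3P [/eqP hc _ _] _; by rewrite /mvec mem_pblock hc inE.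
Qed.

Lemma mvec_same (F : fieldType) (X : finType) (kappa : X -> X -> F)
  (MV : {set {set X}}) (HMV : multivector_field kappa MV) x y :
  y \in mvec MV x -> mvec MV y = mvec MV x.
Proof.
case: HMV => /and3P [_ ht _] _ h; exact: same_pblock.
Qed.

Lemma compatP (X : finType) (MV : {set {set X}}) (A : {set X}) :
  reflect (forall x y, x \in A -> y \in mvec MV x -> y \in A) (compatible MV A).
Proof.
apply: (iffP forall_inP) => [H x y hx hy|H x hx]; first exact: (subsetP (H x hx)).
by apply/subsetP => y; apply: H.
Qed.

Lemma hull_sub (F : fieldType) (X : finType) (kappa : X -> X -> F)
  (MV : {set {set X}}) (A : {set X}) : A \subset hull kappa MV A.
Proof. by apply/bigcapsP => B /and3P [_ _ h]. Qed.

Lemma hull_min (F : fieldType) (X : finType) (kappa : X -> X -> F)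
  (MV : {set {set X}}) (A B : {set X}) :
  compatible MV B -> loc_closed kappa B -> A \subset B -> hull kappa MV A \subset B.
Proof. move=> h1 h2 h3; apply: bigcap_inf; by rewrite h1 h2 h3. Qed.

Lemma in_hull (F : fieldType) (X : finType) (kappa : X -> X -> F)
  (MV : {set {set X}}) (A : {set X}) x :
  x \in hull kappa MV A -> forall B, compatible MV B -> loc_closed kappa B ->
  A \subset B -> x \in B.
Proof. move=> hx B h1 h2 h3; exact: (subsetP (hull_min h1 h2 h3)). Qed.

Lemma hull_compat (F : fieldType) (X : finType) (kappa : X -> X -> F)
  (MV : {set {set X}}) (A : {set X}) : compatible MV (hull kappa MV A).
Proof.
apply/compatP => x y hx hy; apply/bigcapP => B /and3P [h1 h2 h3].
have /compatP := h1; apply; last exact: hy.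
exact: in_hull hx B h1 h2 h3.
Qed.

Lemma hull_loc (F : fieldType) (X : finType) (kappa : X -> X -> F)
  (MV : {set {set X}}) (A : {set X}) : loc_closed kappa (hull kappa MV A).
Proof.
apply/conv_loc => u v w hu hw huv hvw; apply/bigcapP => B /and3P [h1 h2 h3].
have := (proj1 (conv_loc kappa B) h2); apply.
- exact: in_hull hu B h1 h2 h3.
- exact: in_hull hw B h1 h2 h3.
- exact: huv.
- exact: hvw.
Qed.

Close Scope ring_scope.

Lemma cl1P (F : fieldType) (X : finType) (kappa : X -> X -> F) x y :
  (y \in cl kappa [set x]) = face kappa y x.
Proof.
apply/clP/idP => [[z]|h]; first by rewrite inE => /eqP ->.
by exists x; rewrite ?inE.
Qed.

Lemma PiP (F : fieldType) (X : finType) (kappa : X -> X -> F)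
  (MV : {set {set X}}) x y :
  (y \in Pi kappa MV x) = face kappa y x || (y \in mvec MV x).
Proof. by rewrite /Pi inE cl1P. Qed.

Lemma step_out (F : fieldType) (X : finType) (kappa : X -> X -> F)
  (MV : {set {set X}}) (HMV : multivector_field kappa MV) (S : {set X}) :
  compatible MV S -> loc_closed kappa S -> forall x y,
  x \notin S -> x \in cl kappa S -> y \in Pi kappa MV x -> y \notin S.
Proof.
move=> hc /conv_loc hl x y hx /clP [w hw hxw]; rewrite PiP => /orP [hyx|hy].
  apply/negP => hy; move/negP: hx; apply; exact: hl hy hw hyx hxw.
apply/negP => hyS; move/negP: hx; apply.
move/compatP: hc; apply; first exact: hyS.
by rewrite (mvec_same HMV hy) (mvec_self HMV).
Qed.

Lemma stay_out (F : fieldType) (X : finType) (kappa : X -> X -> F)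
  (MV : {set {set X}}) (HMV : multivector_field kappa MV) (S : {set X}) :
  compatible MV S -> loc_closed kappa S -> forall s x,
  x \notin S -> is_path kappa MV x s -> all (fun y => y \in cl kappa S) (x :: s) ->
  last x s \notin S.
Proof.
move=> hc hl; elim=> [|y s IH] x hx //= /andP [hxy hp] /and3P [hxc hyc hall].
apply: IH => //; last by rewrite /= hyc.
exact: step_out hxc hxy.
Qed.

Lemma isolates_cl (F : fieldType) (X : finType) (kappa : X -> X -> F)
  (MV : {set {set X}}) (HMV : multivector_field kappa MV) (S : {set X}) :
  compatible MV S -> loc_closed kappa S -> isolates kappa MV (cl kappa S) S.
Proof.
move=> hc hl; split; first by rewrite /is_closed cl_cl.
split; first exact: sub_cl.
split.
  move=> x0 s; elim: s x0 => [|y s IH] x0 //=; first by move=> _ _ _ ->.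
  move=> /andP [hxy hp] /andP [hx0c hall] hx0 hlast.
  rewrite hx0 /=.
  case hyS: (y \in S).
    move: hxy hp hx0c hall hx0 hlast; rewrite /= => hxy hp hx0c hall hx0 hlast.
    by have /andP [] := IH y hp hall hyS hlast.
  have := stay_out HMV hc hl (negbT hyS) hp hall.
  by rewrite hlast.
apply/subsetP => y /bigcupP [x hx]; rewrite PiP => /orP [h|h].
  by apply/clP; exists x.
apply: (subsetP (sub_cl kappa S)); move/compatP: hc; apply; [exact: hx| exact: h].
Qed.

Close Scope ring_scope.

Lemma cyc_step (T : Type) (y : T) (p : seq T) : last y p = y ->
  forall i, (i < size p)%N -> nth y (y::p) (i.+1 %% size p) = nth y p i.
Proof.
move=> hl i hi; case: (ltnP i.+1 (size p)) => h; first by rewrite modn_small.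
have hs : size p = i.+1 by apply/eqP; rewrite eqn_leq h hi.
by rewrite hs modnn /= -{1}hl -nth_last hs.
Qed.

Definition rho_of (T : Type) (y : T) (p : seq T) (k : int) : T :=
  nth y (y :: p) `|(k %% (size p)%:Z)%Z|.

Local Open Scope ring_scope.

Lemma mod_nat_abs (k : int) (n : nat) : (0 < n)%N ->
  ((k %% n%:Z)%Z = `|(k %% n%:Z)%Z|%N%:Z) /\ (`|(k %% n%:Z)%Z| < n)%N.
Proof.
move=> hn; have hn0 : n%:Z != 0 by rewrite eqz_nat -lt0n.
have h0 := modz_ge0 k hn0.
have hlt : (k %% n%:Z)%Z < n%:Z by apply: ltz_pmod; rewrite ltz_nat.
split; first by rewrite gez0_abs.
by rewrite -ltz_nat gez0_abs.
Qed.

Lemma rho_succ (T : eqType) (y : T) (p : seq T) (k : int) :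
  (0 < size p)%N -> last y p = y ->
  rho_of y p (k + 1) = nth y p `|(k %% (size p)%:Z)%Z|.
Proof.
move=> hn hl; have [hi hlt] := mod_nat_abs k hn.
rewrite /rho_of -modzDml hi -PoszD addn1 modz_nat absz_nat.
exact: cyc_step.
Qed.

Lemma rho_mod (T : Type) (y : T) (p : seq T) (k m : int) :
  (k %% (size p)%:Z)%Z = (m %% (size p)%:Z)%Z -> rho_of y p k = rho_of y p m.
Proof. by move=> h; rewrite /rho_of h. Qed.

Lemma rho0 (T : Type) (y : T) (p : seq T) : rho_of y p 0 = y.
Proof. by rewrite /rho_of mod0z. Qed.

Lemma rho_in (T : eqType) (y a : T) (p : seq T) : (0 < size p)%N -> last y p = y ->
  a \in y :: p -> exists j : int, rho_of y p j = a.
Proof.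
move=> hn hl ha; exists (index a (y :: p))%:Z.
have hle : (index a (y :: p) <= size p)%N by rewrite -ltnS -[(size p).+1]/(size (y::p)) index_mem.
rewrite /rho_of modz_nat absz_nat.
case: (ltnP (index a (y :: p)) (size p)) => h.
  by rewrite modn_small // nth_index.
have hs : index a (y :: p) = size p by apply/eqP; rewrite eqn_leq hle h.
rewrite hs modnn /=.
have := nth_index y ha; rewrite hs /=.
move=> <-; clear ha h hle hs.
case: p hn hl => [//|z q] _ /= hl.
by rewrite -[size q]/((size (z :: q)).-1) nth_last /= hl.
Qed.

Close Scope ring_scope.

Definition edge (F : fieldType) (X : finType) (kappa : X -> X -> F)
  (MV : {set {set X}}) (S : {set X}) : rel X :=
  fun a b => (b \in Pi kappa MV a) && (b \in S).

Lemma seg_connect (F : fieldType) (X : finType) (kappa : X -> X -> F)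
  (MV : {set {set X}}) (phi : int -> X) (Hsol : solution kappa MV phi)
  (B : {set X}) n s0 :
  (forall i, (i <= n)%N -> phi (s0 + i%:Z)%R \in B) ->
  connect (edge kappa MV B) (phi s0) (phi (s0 + n%:Z)%R).
Proof.
elim: n => [|n IH] h; first by rewrite GRing.addr0 connect0.
apply: connect_trans (IH (fun i hi => h i (leqW hi))) _.
apply: connect1; rewrite /edge.
have -> : (s0 + n.+1%:Z = (s0 + n%:Z) + 1)%R by rewrite -GRing.addrA -PoszD addn1.
by rewrite Hsol /= -(GRing.addrA s0) -PoszD addn1 h.
Qed.

Lemma cycle_exists (X : finType) (e : rel X) y (l : seq X) : e y y ->
  (forall a, a \in l -> connect e y a && connect e a y) ->
  exists p, [/\ path e y p, last y p = y, (0 < size p)%N &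
                forall a, a \in l -> a \in y :: p].
Proof.
move=> hyy; elim: l => [|a l IH] h.
  by exists [:: y]; split => //=; rewrite hyy.
have [p' [hp' hl' hs' hm']] : exists p, [/\ path e y p, last y p = y, (0 < size p)%N &
                forall a, a \in l -> a \in y :: p].
  by apply: IH => b hb; apply: h; rewrite inE hb orbT.
have /andP [/connectP [p1 hp1 ha1] /connectP [p2 hp2 ha2]] := h a (mem_head _ _).
exists (p1 ++ p2 ++ p'); split.
- by rewrite cat_path hp1 -ha1 cat_path hp2 -ha2.
- by rewrite last_cat -ha1 last_cat -ha2.
- by rewrite !size_cat; lia.
move=> b; rewrite inE => /orP [/eqP ->|hb].
  have : last y p1 \in y :: p1 by exact: mem_last.
  by rewrite -ha1 !inE mem_cat => /orP [->|->]; rewrite ?orbT.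
move: (hm' b hb); rewrite !inE !mem_cat => /orP [->//|->]; by rewrite !orbT.
Qed.

Close Scope ring_scope.

Local Open Scope ring_scope.

Lemma ineqs (k r n : int) : (0 <= r)%R -> (r < n)%R -> r != 0 ->
  ((-1) * n + (k + r) < k)%R /\ (k < k + r)%R.
Proof. move=> *; split; lia. Qed.

Lemma general (F : fieldType) (X : finType) (dim : X -> nat) (kappa : X -> X -> F)
  (MV : {set {set X}}) (HMV : multivector_field kappa MV)
  (phi : int -> X) (Hsol : solution kappa MV phi) (A : {set X})
  (HA0 : exists a, a \in A)
  (Hconn : forall a0 a, a0 \in A -> a \in A -> exists s0 (n : nat),
      phi s0 = a0 /\ phi (s0 + n%:Z)%R = a /\
      forall i, (i <= n)%N -> phi (s0 + i%:Z)%R \in A)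
  (Hess : forall x, regular dim kappa (mvec MV x) -> exists2 a, a \in A & a \notin mvec MV x) :
  hull kappa MV A != set0 /\ isolated_invariant dim kappa MV (hull kappa MV A).
Proof.
set S := hull kappa MV A.
have hAS : A \subset S := hull_sub kappa MV A.
have hSc : compatible MV S := hull_compat kappa MV A.
have hSl : loc_closed kappa S := hull_loc kappa MV A.
split.
  case: HA0 => a ha; apply/set0Pn; exists a; exact: (subsetP hAS).
split; last by exists (cl kappa S); apply: isolates_cl.
set e := edge kappa MV S.
have hstrong : forall a0 a, a0 \in A -> a \in A -> connect e a0 a.
  move=> a0 a h0 h; have [s0 [n [e0 [e1 hin]]]] := Hconn a0 a h0 h.
  rewrite -e0 -e1; apply: seg_connect => // i hi; exact: (subsetP hAS _ (hin i hi)).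
have hR : forall y, y \in S ->
    (exists2 a, a \in A & connect e a y) /\ (exists2 a, a \in A & connect e y a).
  move=> y hy.
  pose R := [set z in S | [exists a in A, connect e a z] && [exists a in A, connect e z a]].
  have : S \subset R.
    apply: hull_min.
    - apply/compatP => z w; rewrite inE => /and3P [hz /existsP [a /andP [ha haz]] /existsP [b /andP [hb hzb]]] hw.
      have hwS : w \in S by exact: (compatP _ _ hSc z w hz hw).
      have ezw : e z w by rewrite /e /edge PiP hw orbT hwS.
      have ewz : e w z by rewrite /e /edge PiP (mvec_same HMV hw) (mvec_self HMV) orbT hz.
      rewrite inE hwS /=; apply/andP; split; apply/existsP.
        exists a; rewrite ha /=; exact: connect_trans haz (connect1 ezw).
      exists b; rewrite hb /=; exact: connect_trans (connect1 ewz) hzb.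
    - apply/conv_loc => u v w; rewrite !inE.
      move=> /and3P [hu _ /existsP [b /andP [hb hub]]] /and3P [hw /existsP [a /andP [ha haw]] _] huv hvw.
      have hv : v \in S := proj1 (conv_loc kappa S) hSl u v w hu hw huv hvw.
      have ewv : e w v by rewrite /e /edge PiP hvw hv.
      have evu : e v u by rewrite /e /edge PiP huv hu.
      rewrite hv /=; apply/andP; split; apply/existsP.
        exists a; rewrite ha /=; exact: connect_trans haw (connect1 ewv).
      exists b; rewrite hb /=; exact: connect_trans (connect1 evu) hub.
    - apply/subsetP => a ha; rewrite inE (subsetP hAS a ha) /=.
      by apply/andP; split; apply/existsP; exists a; rewrite ha connect0.
  move/subsetP/(_ y hy); rewrite inE => /and3P [_ /existsP [a /andP [ha h1]] /existsP [b /andP [hb h2]]].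
  by split; [exists a|exists b].
move=> y hy.
have [[a1 ha1 h1] [a2 ha2 h2]] := hR y hy.
have hyy : e y y by rewrite /e /edge PiP face_refl hy.
have [p [hp hl hs hm]] := @cycle_exists X e y (enum A) hyy (fun a ha =>
  let ha' := (eq_ind _ is_true ha _ (mem_enum A a)) in
  introT andP (conj (connect_trans h2 (hstrong _ _ ha2 ha'))
                    (connect_trans (hstrong _ _ ha' ha1) h1))).
have hstep : forall k, e (rho_of y p k) (rho_of y p (k + 1)).
  move=> k; rewrite rho_succ //; have [_ hlt] := mod_nat_abs k hs.
  have /(pathP y) H := hp; exact: H.
exists (rho_of y p); split; [split|split].
- by move=> k; have /andP [] := hstep k.
- move=> k hreg; have [a ha hna] := Hess _ hreg.
  have hae : a \in enum A by rewrite mem_enum.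
  have [j hj] := rho_in hs hl (hm a hae).
  set n := (size p)%:Z.
  have hn : (0 < n)%R by rewrite ltz_nat.
  set r := ((j - k) %% n)%Z.
  have h0 : (0 <= r)%R by apply: modz_ge0; rewrite gt_eqF.
  have h1' : (r < n)%R by apply: ltz_pmod.
  have hrj : rho_of y p (k + r) = a.
    rewrite -hj; apply: rho_mod; rewrite /r modzDmr.
    by have -> : (k + (j - k) = j)%R by rewrite addrC subrK.
  have hr0 : r != 0.
    apply/eqP => hr; move: hrj; rewrite hr addr0 => hrk.
    by move: hna; rewrite -hrk (mvec_self HMV).
  exists ((-1) * n + (k + r))%R, (k + r)%R.
  have [hi1 hi2] := ineqs k h0 h1' hr0.
  split; first exact: hi1. split; first exact: hi2.
  split; last by rewrite hrj.
  by rewrite (@rho_mod _ _ _ _ (k + r)) ?hrj // modzMDl.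
- by rewrite rho0.
- by move=> t; have := hstep (t - 1); rewrite subrK => /andP [].
Qed.

Close Scope ring_scope.

Local Open Scope ring_scope.

Lemma in_omega (X : finType) (phi : int -> X) x :
  x \in omega_set phi <-> forall t : int, 0 <= t -> exists s : int, t <= s /\ phi s = x.
Proof. by rewrite inE /pbool; case: excluded_middle_informative. Qed.

Lemma in_alpha (X : finType) (phi : int -> X) x :
  x \in alpha_set phi <-> forall t : int, t <= 0 -> exists s : int, s <= t /\ phi s = x.
Proof. by rewrite inE /pbool; case: excluded_middle_informative. Qed.

Lemma omega_tail_l (X : finType) (phi : int -> X) (l : seq X) :
  (forall x, x \in l -> x \notin omega_set phi) ->
  exists T : int, 0 <= T /\ forall s, T <= s -> phi s \notin l.
Proof.
elim: l => [|x l IH] h; first by exists 0.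
have [T1 [hT1 H1]] : exists T : int, 0 <= T /\ forall s, T <= s -> phi s \notin l.
  by apply: IH => y hy; apply: h; rewrite inE hy orbT.
have hx := h x (mem_head _ _).
have [t [ht Ht]] : exists t : int, 0 <= t /\ forall s, t <= s -> phi s <> x.
  apply: NNPP => hn; move/negP: hx; apply; apply/in_omega => t ht.
  apply: NNPP => hn2; apply: hn; exists t; split => // s hs hps; apply: hn2.
  by exists s.
exists (T1 + t); split; first lia.
move=> s hs; rewrite inE negb_or; apply/andP; split.
  by apply/eqP; apply: Ht; lia.
by apply: H1; lia.
Qed.

Lemma alpha_tail_l (X : finType) (phi : int -> X) (l : seq X) :
  (forall x, x \in l -> x \notin alpha_set phi) ->
  exists T : int, T <= 0 /\ forall s, s <= T -> phi s \notin l.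
Proof.
elim: l => [|x l IH] h; first by exists 0.
have [T1 [hT1 H1]] : exists T : int, T <= 0 /\ forall s, s <= T -> phi s \notin l.
  by apply: IH => y hy; apply: h; rewrite inE hy orbT.
have hx := h x (mem_head _ _).
have [t [ht Ht]] : exists t : int, t <= 0 /\ forall s, s <= t -> phi s <> x.
  apply: NNPP => hn; move/negP: hx; apply; apply/in_alpha => t ht.
  apply: NNPP => hn2; apply: hn; exists t; split => // s hs hps; apply: hn2.
  by exists s.
exists (T1 + t); split; first lia.
move=> s hs; rewrite inE negb_or; apply/andP; split.
  by apply/eqP; apply: Ht; lia.
by apply: H1; lia.
Qed.

Lemma omega_tail (X : finType) (phi : int -> X) :
  exists T : int, 0 <= T /\ forall s, T <= s -> phi s \in omega_set phi.
Proof.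
have hl : forall x, x \in enum (~: omega_set phi) -> x \notin omega_set phi.
  by move=> x; rewrite mem_enum inE.
have [T [hT H]] := @omega_tail_l X phi _ hl.
exists T; split => // s hs; have := H s hs; by rewrite mem_enum inE negbK.
Qed.

Lemma alpha_tail (X : finType) (phi : int -> X) :
  exists T : int, T <= 0 /\ forall s, s <= T -> phi s \in alpha_set phi.
Proof.
have hl : forall x, x \in enum (~: alpha_set phi) -> x \notin alpha_set phi.
  by move=> x; rewrite mem_enum inE.
have [T [hT H]] := @alpha_tail_l X phi _ hl.
exists T; split => // s hs; have := H s hs; by rewrite mem_enum inE negbK.
Qed.

Close Scope ring_scope.

Local Open Scope ring_scope.

Lemma omega_main (F : fieldType) (X : finType) (dim : X -> nat)
  (kappa : X -> X -> F)
  (MV : {set {set X}}) (HMV : multivector_field kappa MV)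
  (phi : int -> X) (Hphi : essential dim kappa MV phi) :
  omega_lim kappa MV phi != set0 /\ isolated_invariant dim kappa MV (omega_lim kappa MV phi).
Proof.
have [T [hT HT]] := omega_tail phi.
apply: (general HMV (proj1 Hphi)).
- by exists (phi T); apply: HT.
- move=> a0 a h0 h.
  have [s0 [hs0 e0]] := (proj1 (in_omega phi a0) h0) T hT.
  have hs0' : 0 <= s0 by lia.
  have [s1 [hs1 e1]] := (proj1 (in_omega phi a) h) s0 hs0'.
  have hn : (`|s1 - s0|%N)%:Z = s1 - s0 by rewrite gez0_abs // subr_ge0.
  exists s0, `|s1 - s0|%N; split => //; split; first by rewrite hn addrC subrK.
  move=> i hi; apply: HT; lia.
- move=> x hreg; case: (boolP (omega_set phi \subset mvec MV x)) => hsub;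
    last by move/subsetPn: hsub.
  exfalso; have hTm : phi T \in mvec MV x := subsetP hsub _ (HT T (lexx T)).
  have hm := mvec_same HMV hTm.
  have := (proj2 Hphi) T; rewrite hm => /(_ hreg) [l1 [l2 [_ [hl2 [_ hn]]]]].
  move/negP: hn; apply; apply: (subsetP hsub); apply: HT; exact: ltW.
Qed.

Lemma alpha_main (F : fieldType) (X : finType) (dim : X -> nat)
  (kappa : X -> X -> F)
  (MV : {set {set X}}) (HMV : multivector_field kappa MV)
  (phi : int -> X) (Hphi : essential dim kappa MV phi) :
  alpha_lim kappa MV phi != set0 /\ isolated_invariant dim kappa MV (alpha_lim kappa MV phi).
Proof.
have [T [hT HT]] := alpha_tail phi.
apply: (general HMV (proj1 Hphi)).
- by exists (phi T); apply: HT.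
- move=> a0 a h0 h.
  have [s1 [hs1 e1]] := (proj1 (in_alpha phi a) h) T hT.
  have hs1' : s1 <= 0 by lia.
  have [s0 [hs0 e0]] := (proj1 (in_alpha phi a0) h0) s1 hs1'.
  have hn : (`|s1 - s0|%N)%:Z = s1 - s0 by rewrite gez0_abs // subr_ge0.
  exists s0, `|s1 - s0|%N; split => //; split; first by rewrite hn addrC subrK.
  move=> i hi; apply: HT; lia.
- move=> x hreg; case: (boolP (alpha_set phi \subset mvec MV x)) => hsub;
    last by move/subsetPn: hsub.
  exfalso; have hTm : phi T \in mvec MV x := subsetP hsub _ (HT T (lexx T)).
  have hm := mvec_same HMV hTm.
  have := (proj2 Hphi) T; rewrite hm => /(_ hreg) [l1 [l2 [hl1 [_ [hn _]]]]].
  move/negP: hn; apply; apply: (subsetP hsub); apply: HT; exact: ltW.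
Qed.

Close Scope ring_scope.

Theorem mainTheorem2 (F : fieldType) (X : finType) (dim : X -> nat)
  (kappa : X -> X -> F)
  (Hgr : lefschetz_graded dim kappa) (Hdd : lefschetz_dd0 kappa)
  (MV : {set {set X}}) (HMV : multivector_field kappa MV)
  (phi : int -> X) (Hphi : essential dim kappa MV phi) :
  alpha_lim kappa MV phi != set0 /\ isolated_invariant dim kappa MV (alpha_lim kappa MV phi) /\
  omega_lim kappa MV phi != set0 /\ isolated_invariant dim kappa MV (omega_lim kappa MV phi).
Proof.
have [h1 h2] := alpha_main HMV Hphi.
have [h3 h4] := omega_main HMV Hphi.
by split; [|split; [|split]].
Qed.
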